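(* Let $G$ be an $n$-resource selection game with I.D.-dependent weighting. Then $h^s_j=h^{s'}_j$ for every $j\in[n]$ and every two strong Nash equilibria $s,s'$ of $G$.
   Context: For $n,k\in\mathbb{N}$, an $n$-resource/$k$-player-type resource selection game with I.D.-dependent weighting is a triple $\bigl((f_j)_{j=1}^n;(R^i)_{i=1}^k;(f^i_j)_{i\in[k],j\in R^i}\bigr)$ where each $f_j:[0,\infty)\to\mathbb{R}$ is nondecreasing, each $R^i$ is a nonempty subset of $[n]$, and each $f^i_j:[0,1]\to[0,\infty)$ is increasing (no continuity assumed). A consumption profile is a map $s:[k]\to[0,\infty)^{[n]}$ with $s_j(i)=0$ for $j\notin R^i$ and $\sum_j s_j(i)=1$. The weighted load of resource $j$ is $\mu^s_j=\sum_{i:\,j\in R^i}f^i_j(s_j(i))$ and its cost is $h^s_j=f_j(\mu^s_j)$. $s$ is a Nash equilibrium if for every $i\in[k]$, every $\ell$ with $s_\ell(i)>0$ and every $j\in R^i$, $h^s_\ell\le h^s_j$. For a Nash equilibrium $s$ and $i\in[k]$, let $h^i=h^s_\ell$ for any $\ell$ with $s_\ell(i)>0$. A Nash equilibrium $s$ is strong if there is no consumption profile $s'\ne s$ such that for every $i\in[k]$ and every $\ell$ with $s'_\ell(i)>s_\ell(i)$, $h^{s'}_\ell<h^i$. *)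

(* Defs.v *)
From Stdlib Require Export Reals Lra.
Open Scope R_scope.

Fixpoint rsum (m : nat) (g : nat -> R) : R :=
  match m with
  | O => 0
  | S m' => rsum m' g + g m'
  end.

(* A game with n resources 0..n-1 and k player types 0..k-1:
   f j        : cost function of resource j
   Rs i j     : membership j \in R^i (boolean)
   fw i j     : the weighting f^i_j
   A profile s : nat -> nat -> R, with s i j = s_j(i). *)

Record game (n k : nat) := Game {
  f  : nat -> R -> R;
  Rs : nat -> nat -> bool;
  fw : nat -> nat -> R -> R
}.
Arguments f {n k}.
Arguments Rs {n k}.
Arguments fw {n k}.

Definition valid_game {n k} (G : game n k) : Prop :=
  (forall j, (j < n)%nat -> forall x y, 0 <= x -> x <= y -> f G j x <= f G j y)
  /\ (forall i, (i < k)%nat ->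
        (forall j, Rs G i j = true -> (j < n)%nat)
        /\ (exists j, Rs G i j = true))
  /\ (forall i j, (i < k)%nat -> Rs G i j = true ->
        (forall x, 0 <= x <= 1 -> 0 <= fw G i j x)
        /\ (forall x y, 0 <= x -> x < y -> y <= 1 -> fw G i j x < fw G i j y)).

Definition profile {n k} (G : game n k) (s : nat -> nat -> R) : Prop :=
  forall i, (i < k)%nat ->
    (forall j, (j < n)%nat -> 0 <= s i j)
    /\ (forall j, (j < n)%nat -> Rs G i j = false -> s i j = 0)
    /\ rsum n (s i) = 1.

Definition load {n k} (G : game n k) (s : nat -> nat -> R) (j : nat) : R :=
  rsum k (fun i => if Rs G i j then fw G i j (s i j) else 0).

Definition cost {n k} (G : game n k) (s : nat -> nat -> R) (j : nat) : R :=
  f G j (load G s j).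

Definition nash {n k} (G : game n k) (s : nat -> nat -> R) : Prop :=
  profile G s /\
  forall i l j, (i < k)%nat -> (l < n)%nat -> (j < n)%nat ->
    0 < s i l -> Rs G i j = true -> cost G s l <= cost G s j.

(* h^i = h^s_{l0} for any l0 with s_{l0}(i) > 0 (well defined at a NE). *)
Definition strong_nash {n k} (G : game n k) (s : nat -> nat -> R) : Prop :=
  nash G s /\
  ~ exists s', profile G s'
      /\ (exists i j, (i < k)%nat /\ (j < n)%nat /\ s' i j <> s i j)
      /\ (forall i l, (i < k)%nat -> (l < n)%nat -> s i l < s' i l ->
            forall l0, (l0 < n)%nat -> 0 < s i l0 ->
              cost G s' l < cost G s l0).

(* Main.v *)
Require Import Defs.
From Stdlib Require Import Reals Lra Lia ClassicalEpsilon Classical.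
Open Scope R_scope.

Lemma rsum_le m g h : (forall i, (i < m)%nat -> g i <= h i) -> rsum m g <= rsum m h.
Proof.
  induction m; simpl; intros H; [lra|].
  assert (rsum m g <= rsum m h) by (apply IHm; intros; apply H; lia).
  assert (g m <= h m) by (apply H; lia). lra.
Qed.

Lemma rsum_lt_ex m g h : rsum m g < rsum m h -> exists i, (i < m)%nat /\ g i < h i.
Proof.
  intros H. apply NNPP; intros C.
  assert (rsum m h <= rsum m g); [|lra].
  apply rsum_le; intros i Hi. apply Rnot_lt_le. intros Hl. apply C. exists i; auto.
Qed.

Lemma rsum_nonneg m g : (forall i, (i < m)%nat -> 0 <= g i) -> 0 <= rsum m g.
Proof.
  intros H. assert (rsum m (fun _ => 0) <= rsum m g) by (apply rsum_le; auto).
  assert (rsum m (fun _ => 0) = 0) by (clear; induction m; simpl; [lra| rewrite IHm; lra]).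
  lra.
Qed.

Lemma rsum_term m g j : (forall i, (i < m)%nat -> 0 <= g i) -> (j < m)%nat -> g j <= rsum m g.
Proof.
  induction m; intros H Hj; [lia|]. simpl.
  destruct (Nat.eq_dec j m).
  - subst. assert (0 <= rsum m g) by (apply rsum_nonneg; intros; apply H; lia). lra.
  - assert (g j <= rsum m g) by (apply IHm; [intros; apply H; lia| lia]).
    assert (0 <= g m) by (apply H; lia). lra.
Qed.

Lemma rsum_ex m g : rsum m g <> 0 -> exists j, (j < m)%nat /\ g j <> 0.
Proof.
  induction m; simpl; intros H; [lra|].
  destruct (Req_dec (g m) 0).
  - destruct IHm as [j [Hj Hg]]; [lra|]. exists j; split; auto; lia.
  - exists m; split; auto; lia.
Qed.

Section Aux.
Variables (n k : nat) (G : game n k).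

Lemma prof_Rs s i j : profile G s -> (i < k)%nat -> (j < n)%nat -> 0 < s i j -> Rs G i j = true.
Proof.
  intros P Hi Hj Hp. destruct (Rs G i j) eqn:E; auto.
  destruct (P i Hi) as [_ [P2 _]]. rewrite (P2 j Hj E) in Hp. lra.
Qed.

Lemma prof_le1 s i j : profile G s -> (i < k)%nat -> (j < n)%nat -> s i j <= 1.
Proof.
  intros P Hi Hj. destruct (P i Hi) as [P1 [_ P3]]. rewrite <- P3.
  apply rsum_term; auto.
Qed.

Lemma prof_ex s i : profile G s -> (i < k)%nat -> exists j, (j < n)%nat /\ 0 < s i j.
Proof.
  intros P Hi. destruct (P i Hi) as [P1 [_ P3]].
  destruct (rsum_ex n (s i)) as [j [Hj Hs]]; [lra|].
  exists j; split; auto. specialize (P1 j Hj). lra.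
Qed.

Lemma load_nonneg s j : valid_game G -> profile G s -> (j < n)%nat -> 0 <= load G s j.
Proof.
  intros [V1 [V2 V3]] P Hj. unfold load. apply rsum_nonneg. intros i Hi.
  destruct (Rs G i j) eqn:E; [|lra].
  destruct (V3 i j Hi E) as [W _]. apply W.
  split; [apply (proj1 (P i Hi)); auto| apply prof_le1; auto].
Qed.

Lemma half s s' : valid_game G -> strong_nash G s -> nash G s' ->
  forall l, (l < n)%nat -> cost G s l <= cost G s' l.
Proof.
  intros V [[Ps Ns] Ss] [Ps' Ns'] l Hl.
  pose proof V as [V1 [V2 V3]].
  apply Rnot_lt_le; intros Hlt.
  set (H := fun i => exists a b, (a<n)%nat /\ (b<n)%nat /\ 0 < s i a /\ 0 < s' i b
                                   /\ cost G s' b < cost G s a).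
  set (t := fun i j => if excluded_middle_informative (H i) then s' i j else s i j).
  assert (Hload : load G s' l < load G s l).
  { apply Rnot_le_lt; intros Hle. unfold cost in Hlt.
    pose proof (V1 l Hl _ _ (load_nonneg s l V Ps Hl) Hle). lra. }
  destruct (rsum_lt_ex _ _ _ Hload) as [i0 [Hi0 Hc]].
  destruct (Rs G i0 l) eqn:E0; [|lra].
  assert (Hs0 : s' i0 l < s i0 l).
  { apply Rnot_le_lt; intros Hle.
    destruct (V3 i0 l Hi0 E0) as [_ W].
    destruct (Rle_lt_or_eq_dec _ _ Hle) as [Hq|Hq].
    - assert (fw G i0 l (s i0 l) < fw G i0 l (s' i0 l)); [|lra].
      apply W; auto. apply (proj1 (Ps i0 Hi0)); auto. apply prof_le1; auto.
    - rewrite Hq in Hc. lra. }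
  assert (HH0 : H i0).
  { destruct (prof_ex s' i0 Ps' Hi0) as [b [Hb Hb']].
    exists l, b. repeat split; auto.
    - pose proof (proj1 (Ps' i0 Hi0) l Hl). lra.
    - pose proof (Ns' i0 b l Hi0 Hb Hl Hb' E0). lra. }
  apply Ss. exists t. split; [|split].
  - intros i Hi. unfold t. destruct (excluded_middle_informative (H i)); auto.
  - exists i0, l. repeat split; auto. unfold t.
    destruct (excluded_middle_informative (H i0)); [lra|contradiction].
  - intros i l1 Hi Hl1 Hinc l0 Hl0 Hpos.
    unfold t in Hinc. destruct (excluded_middle_informative (H i)) as [Hh|Hh]; [|lra].
    destruct Hh as [a [b [Ha [Hb [Ha' [Hb' Hab]]]]]].
    assert (0 <= s i l1) by (apply (proj1 (Ps i Hi)); auto).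
    assert (Hp1 : 0 < s' i l1) by lra.
    assert (Rl1 : Rs G i l1 = true) by (apply (prof_Rs s'); auto).
    assert (Rb : Rs G i b = true) by (apply (prof_Rs s'); auto).
    assert (Rl0 : Rs G i l0 = true) by (apply (prof_Rs s); auto).
    assert (Ra : Rs G i a = true) by (apply (prof_Rs s); auto).
    pose proof (Ns' i l1 b Hi Hl1 Hb Hp1 Rb).
    pose proof (Ns' i b l1 Hi Hb Hl1 Hb' Rl1).
    pose proof (Ns i a l0 Hi Ha Hl0 Ha' Rl0).
    pose proof (Ns i l0 a Hi Hl0 Ha Hpos Ra).
    pose proof (Ns i a l1 Hi Ha Hl1 Ha' Rl1).
    assert (Hkey : cost G s' l1 < cost G s l1) by lra.
    assert (cost G t l1 <= cost G s' l1); [|lra].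
    unfold cost. apply V1; auto.
    + unfold load. apply rsum_nonneg. intros i' Hi'.
      destruct (Rs G i' l1) eqn:E'; [|lra].
      apply (proj1 (V3 i' l1 Hi' E')). unfold t.
      destruct (excluded_middle_informative (H i'));
        (split; [apply (proj1 (Ps' i' Hi')) || apply (proj1 (Ps i' Hi')); auto
               | apply prof_le1; auto]).
    + unfold load. apply rsum_le. intros i' Hi'.
      destruct (Rs G i' l1) eqn:E'; [|lra].
      unfold t. destruct (excluded_middle_informative (H i')) as [_|Hn]; [lra|].
      assert (Hz : s i' l1 = 0).
      { assert (Hz0 : 0 <= s i' l1) by (apply (proj1 (Ps i' Hi')); auto).
        destruct (Rle_lt_or_eq_dec _ _ Hz0) as [Hq|Hq]; [|lra].
        exfalso.
        destruct (prof_ex s' i' Ps' Hi') as [b' [Hb1 Hb2]].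
        assert (~ cost G s' b' < cost G s l1).
        { intros C. apply Hn. exists l1, b'. repeat split; auto. }
        pose proof (Ns' i' b' l1 Hi' Hb1 Hl1 Hb2 E'). lra. }
      rewrite Hz.
      destruct (V3 i' l1 Hi' E') as [_ W].
      assert (Hz1 : 0 <= s' i' l1) by (apply (proj1 (Ps' i' Hi')); auto).
      destruct (Rle_lt_or_eq_dec _ _ Hz1) as [Hq|Hq].
      * left. apply W; auto; try lra. apply prof_le1; auto.
      * rewrite <- Hq. lra.
Qed.
End Aux.

Theorem mainTheorem6 (n k : nat) (G : game n k) (s s' : nat -> nat -> R) :
  valid_game G -> strong_nash G s -> strong_nash G s' ->
  forall j, (j < n)%nat -> cost G s j = cost G s' j.
Proof.
  intros V S S' j Hj.
  pose proof (half n k G s s' V S (proj1 S') j Hj).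
  pose proof (half n k G s' s V S' (proj1 S) j Hj). lra.
Qed.
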